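(* Let $H,K,A_1,\ldots,A_n$ be groups such that $H\times K$ is a finite-index subgroup of $A_1\times\cdots\times A_n$. If $A_1,\ldots,A_n$ have almost stable centralisers and if $H$ is a non-cyclic group admitting an IMC generating set, then there exists an index $1\le i\le n$ such that $$H\leq \mathrm{VZ}(A_1)\times\cdots\times\mathrm{VZ}(A_{i-1})\times A_i\times\mathrm{VZ}(A_{i+1})\times\cdots\times\mathrm{VZ}(A_n).$$
   Context: A group $G$ has almost stable centralisers if for all $g\in G$ and $k\ge1$, the centraliser $C(g)$ has finite index in $C(g^k)$. A subset $S\subset G$ is an IMC generating set if it generates $G$ and satisfies: (Independence) for all distinct $s_1,s_2\in S$ and all integers $p,q\ge1$, $[s_1^p,s_2^q]\ne1$; (Maximal Centralisers) for all $s\in S$ and $g\in G$, if $C(s)\subsetneq C(g)$ then $g=1$. The virtual centre $\mathrm{VZ}(G)$ is the set of elements of $G$ centralising some finite-index subgroup of $G$. *)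

(* Defs.v *)
From Stdlib Require Import List FunctionalExtensionality.
From mathcomp Require Import all_boot.

Set Implicit Arguments.
Unset Strict Implicit.
Unset Printing Implicit Defensive.

Record AGroup := MkAGroup {
  gcar :> Type;
  gmul : gcar -> gcar -> gcar;
  gone : gcar;
  ginv : gcar -> gcar;
  gmulA : forall x y z, gmul x (gmul y z) = gmul (gmul x y) z;
  gmul1 : forall x, gmul gone x = x;
  gmulV : forall x, gmul (ginv x) x = gone
}.

Arguments gmul {a} : rename.
Arguments gone {a} : rename.
Arguments ginv {a} : rename.

Section GroupDefs.
Variable G : AGroup.

Fixpoint gpow (x : G) (k : nat) : G :=
  match k with O => gone | S k' => gmul x (gpow x k') end.

Definition gcommute (x y : G) : Prop := gmul x y = gmul y x.

Definition is_subgroup (S : G -> Prop) : Prop :=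
  S gone /\ (forall x y, S x -> S y -> S (gmul x y)) /\ (forall x, S x -> S (ginv x)).

Definition whole : G -> Prop := fun _ => True.

Definition finite_index (T S : G -> Prop) : Prop :=
  (forall x, T x -> S x) /\
  exists l : list G, (forall y, In y l -> S y) /\
    forall x, S x -> exists y, In y l /\ T (gmul (ginv y) x).

Definition centraliser_in (S : G -> Prop) (g : G) : G -> Prop :=
  fun x => S x /\ gcommute x g.

Definition centraliser (g : G) : G -> Prop := centraliser_in whole g.

Definition almost_stable_centralisers : Prop :=
  forall (g : G) (k : nat), 1 <= k ->
    finite_index (centraliser g) (centraliser (gpow g k)).

Definition virtual_centre (g : G) : Prop :=
  exists T : G -> Prop, is_subgroup T /\ finite_index T whole /\
    forall t, T t -> gcommute g t.

Definition generated (X : G -> Prop) (x : G) : Prop :=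
  forall T, is_subgroup T -> (forall y, X y -> T y) -> T x.

(* integer powers g^z, z in Z, written as g^k or (g^k)^-1 with k : nat *)
Definition cyclic_subgroup (S : G -> Prop) : Prop :=
  exists g, S g /\ forall x, S x -> exists k : nat, x = gpow g k \/ x = ginv (gpow g k).

Definition strict_subset (P Q : G -> Prop) : Prop :=
  (forall x, P x -> Q x) /\ exists x, Q x /\ ~ P x.

Definition IMC_generating_set (S X : G -> Prop) : Prop :=
  (forall x, X x -> S x) /\
  (forall x, S x -> generated X x) /\
  (forall s1 s2, X s1 -> X s2 -> s1 <> s2 ->
     forall p q : nat, 1 <= p -> 1 <= q -> ~ gcommute (gpow s1 p) (gpow s2 q)) /\
  (forall s g, X s -> S g ->
     strict_subset (centraliser_in S s) (centraliser_in S g) -> g = gone).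

Definition internal_direct_product (S T : G -> Prop) : Prop :=
  is_subgroup S /\ is_subgroup T /\
  (forall s t, S s -> T t -> gcommute s t) /\
  (forall x, S x -> T x -> x = gone).

Definition prod_set (S T : G -> Prop) : G -> Prop :=
  fun x => exists s t, S s /\ T t /\ x = gmul s t.

End GroupDefs.

Section Product.
Variables (n : nat) (A : 'I_n -> AGroup).

Definition pcar := forall i : 'I_n, A i.
Definition pmul (x y : pcar) : pcar := fun i => gmul (x i) (y i).
Definition pone : pcar := fun i => gone.
Definition pinv (x : pcar) : pcar := fun i => ginv (x i).

Lemma pmulA x y z : pmul x (pmul y z) = pmul (pmul x y) z.
Proof. apply functional_extensionality_dep => i; exact: gmulA. Qed.
Lemma pmul1 x : pmul pone x = x.
Proof. apply functional_extensionality_dep => i; exact: gmul1. Qed.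
Lemma pmulV x : pmul (pinv x) x = pone.
Proof. apply functional_extensionality_dep => i; exact: gmulV. Qed.

Definition prodGroup : AGroup := MkAGroup pmulA pmul1 pmulV.
End Product.

(* Main.v *)
Require Import Defs.
From Stdlib Require Import Classical ClassicalEpsilon FunctionalExtensionality List.
From mathcomp Require Import all_boot.
Set Implicit Arguments. Unset Strict Implicit.

Section GL.
Variable G : AGroup.
Implicit Types x y z : G.

Lemma mulgVr x : gmul x (ginv x) = gone.
Proof.
have e : gmul x (ginv x) = gmul (gmul (ginv (ginv x)) (ginv x)) (gmul x (ginv x)).
  by rewrite gmulV gmul1.
by rewrite e -gmulA (gmulA (ginv x) x) gmulV gmul1 gmulV.
Qed.

Lemma mulg1 x : gmul x gone = x.
Proof. by rewrite -(gmulV x) gmulA mulgVr gmul1. Qed.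

Lemma mulKg x y : gmul (ginv x) (gmul x y) = y.
Proof. by rewrite gmulA gmulV gmul1. Qed.
Lemma mulVKg x y : gmul x (gmul (ginv x) y) = y.
Proof. by rewrite gmulA mulgVr gmul1. Qed.
Lemma mulgK x y : gmul (gmul y x) (ginv x) = y.
Proof. by rewrite -gmulA mulgVr mulg1. Qed.
Lemma mulgVK x y : gmul (gmul y (ginv x)) x = y.
Proof. by rewrite -gmulA gmulV mulg1. Qed.

Lemma mulgI x y z : gmul x y = gmul x z -> y = z.
Proof. by move=> e; rewrite -(mulKg x y) e mulKg. Qed.
Lemma mulIg x y z : gmul y x = gmul z x -> y = z.
Proof. by move=> e; rewrite -(mulgK x y) e mulgK. Qed.

Lemma invgK x : ginv (ginv x) = x.
Proof. apply: (@mulgI (ginv x)); by rewrite mulgVr gmulV. Qed.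
Lemma invMg x y : ginv (gmul x y) = gmul (ginv y) (ginv x).
Proof. apply: (@mulgI (gmul x y)); by rewrite mulgVr -gmulA mulVKg mulgVr. Qed.
Lemma invg1 : ginv (gone : G) = gone.
Proof. by rewrite -{2}(gmulV (gone:G)) mulg1. Qed.

Lemma comm_sym x y : gcommute x y -> gcommute y x.
Proof. by rewrite /gcommute. Qed.
Lemma comm_inv x y : gcommute x y -> gcommute x (ginv y).
Proof.
rewrite /gcommute => e. apply: (@mulgI y). by rewrite gmulA -e mulgK mulVKg.
Qed.
Lemma comm_mul x y z : gcommute x y -> gcommute x z -> gcommute x (gmul y z).
Proof. by rewrite /gcommute => e1 e2; rewrite gmulA e1 -gmulA e2 gmulA. Qed.
Lemma comm1 x : gcommute x gone.
Proof. by rewrite /gcommute gmul1 mulg1. Qed.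

Lemma gpowD x a b : gpow x (a + b) = gmul (gpow x a) (gpow x b).
Proof. elim: a => [|a IH] /=; first by rewrite gmul1. by rewrite IH gmulA. Qed.
Lemma gpowM x a b : gpow x (a * b) = gpow (gpow x a) b.
Proof. elim: b => [|b IH] /=; first by rewrite muln0. by rewrite mulnS gpowD IH. Qed.
Lemma gpow1g a : gpow (gone : G) a = gone.
Proof. elim: a => [|a IH] //=. by rewrite IH gmul1. Qed.
Lemma gpow1 x : gpow x 1 = x.
Proof. by rewrite /= mulg1. Qed.
Lemma comm_pow x y a : gcommute x y -> gcommute x (gpow y a).
Proof. move=> e; elim: a => [|a IH] /=; [exact: comm1| exact: comm_mul]. Qed.
Lemma comm_pow2 x y a b : gcommute x y -> gcommute (gpow x a) (gpow y b).
Proof. move=> e; apply: comm_pow; apply: comm_sym; apply: comm_pow; exact: comm_sym. Qed.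

Lemma sub_pow (S : G -> Prop) x a : is_subgroup S -> S x -> S (gpow x a).
Proof. case=> [S1 [SM SV]] Sx; elim: a => [|a IH] //=; exact: SM. Qed.

Lemma centraliser_sub (g : G) : is_subgroup (centraliser g).
Proof.
rewrite /centraliser /centraliser_in /whole; split; [|split].
- split=> //; apply: comm_sym; exact: comm1.
- move=> x y [_ ex] [_ ey]; split=> //; apply: comm_sym; apply: comm_mul; exact: comm_sym.
- move=> x [_ ex]; split=> //; apply: comm_sym; apply: comm_inv; exact: comm_sym.
Qed.

End GL.

Section FI.
Variable G : AGroup.
Implicit Types x y z : G.

Lemma fi_trans (T S : G -> Prop) :
  finite_index T S -> finite_index S (@whole G) -> finite_index T (@whole G).
Proof.
move=> [TS [l1 [l1S h1]]] [_ [l2 [_ h2]]]; split=> //.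
exists (flat_map (fun y2 => List.map (fun y1 => gmul y2 y1) l1) l2); split=> // x _.
have [y2 [y2l Sy]] := h2 x I.
have [y1 [y1l Ty]] := h1 _ Sy.
exists (gmul y2 y1); split.
  apply/in_flat_map; exists y2; split=> //; apply/in_map_iff; exists y1; by split.
by rewrite invMg -gmulA.
Qed.

Lemma fi_super (T T' : G -> Prop) :
  finite_index T (@whole G) -> (forall x, T x -> T' x) -> finite_index T' (@whole G).
Proof.
move=> [_ [l [_ h]]] sub; split=> //; exists l; split=> // x _.
have [y [yl Ty]] := h x I; exists y; split=> //; exact: sub.
Qed.

Lemma witness_list (Qs : list (G -> Prop)) :
  exists l', forall Q, In Q Qs -> (exists x, Q x) -> exists z, In z l' /\ Q z.
Proof.
elim: Qs => [|Q Qs [l' IH]]; first by exists nil.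
case: (classic (exists x, Q x)) => [[x Qx]|nQ].
- exists (x :: l') => Q' [<-|inQ] ex.
    by exists x; split=> //; left.
  have [z [zl Qz]] := IH Q' inQ ex; exists z; split=> //; by right.
- exists l' => Q' [<-|inQ] ex; first by case: nQ.
  exact: IH.
Qed.

Lemma fi_inter (T1 T2 : G -> Prop) :
  is_subgroup T1 -> is_subgroup T2 ->
  finite_index T1 (@whole G) -> finite_index T2 (@whole G) ->
  finite_index (fun x => T1 x /\ T2 x) (@whole G).
Proof.
move=> [_ [M1 V1]] [_ [M2 V2]] [_ [l1 [_ h1]]] [_ [l2 [_ h2]]]; split=> //.
set Qs := flat_map (fun y1 => List.map (fun y2 => fun x => T1 (gmul (ginv y1) x) /\ T2 (gmul (ginv y2) x)) l2) l1.
have [l' hl'] := witness_list Qs.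
exists l'; split=> // x _.
have [y1 [y1l Ty1]] := h1 x I.
have [y2 [y2l Ty2]] := h2 x I.
have inQ : In (fun x => T1 (gmul (ginv y1) x) /\ T2 (gmul (ginv y2) x)) Qs.
  apply/in_flat_map; exists y1; split=> //; apply/in_map_iff; exists y2; by split.
have [z [zl [Tz1 Tz2]]] := hl' _ inQ (ex_intro _ x (conj Ty1 Ty2)).
exists z; split=> //.
have e : forall y, gmul (ginv z) x = gmul (ginv (gmul (ginv y) z)) (gmul (ginv y) x).
  by move=> y; rewrite invMg invgK -gmulA mulVKg.
split; [rewrite (e y1); apply: M1 => //; exact: V1 | rewrite (e y2); apply: M2 => //; exact: V2].
Qed.

Lemma whole_sub : is_subgroup (@whole G).
Proof. by []. Qed.

Lemma vz1 : virtual_centre (gone : G).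
Proof.
exists (@whole G); split=> //; split.
  split=> //; exists (gone :: nil); split=> // x _; exists gone; split=> //; by left.
move=> t _; rewrite /gcommute gmul1 mulg1 //.
Qed.

Lemma vzM x y : virtual_centre x -> virtual_centre y -> virtual_centre (gmul x y).
Proof.
move=> [T1 [s1 [f1 c1]]] [T2 [s2 [f2 c2]]].
exists (fun x => T1 x /\ T2 x); split; last split.
- case: s1 => [o1 [m1 v1]]; case: s2 => [o2 [m2 v2]].
  split; first by split. split.
    by move=> a b [? ?] [? ?]; split; [exact: m1|exact: m2].
  by move=> a [? ?]; split; [exact: v1|exact: v2].
- exact: fi_inter.
- move=> t [t1 t2]; apply: comm_sym; apply: comm_mul; apply: comm_sym; [exact: c1|exact: c2].
Qed.

Lemma vzV x : virtual_centre x -> virtual_centre (ginv x).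
Proof.
move=> [T [s [f c]]]; exists T; split=> //; split=> // t Tt.
apply: comm_sym; apply: comm_inv; apply: comm_sym; exact: c.
Qed.

Lemma vz_centr (g : G) : finite_index (centraliser g) (@whole G) -> virtual_centre g.
Proof.
move=> f; exists (centraliser g); split; first exact: centraliser_sub.
split=> // t [_ e]; exact: comm_sym.
Qed.

End FI.

Lemma pigeon m (f : nat -> nat) : (forall p, p <= m -> f p < m) ->
  exists p q, p < q <= m /\ f p = f q.
Proof.
move=> hf; apply: NNPP => nex.
have inj : {in iota 0 m.+1 &, injective f}.
  move=> p q; rewrite !mem_iota !add0n => hp hq e.
  case: (ltngtP p q) => // hpq; case: nex.
    by exists p, q; rewrite hpq -ltnS hq.
  by exists q, p; rewrite hpq -ltnS hp.
have u : uniq (map f (iota 0 m.+1)) by rewrite (map_inj_in_uniq inj) iota_uniq.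
have sub : {subset map f (iota 0 m.+1) <= iota 0 m}.
  move=> x /mapP [p]; rewrite mem_iota add0n => hp ->.
  by rewrite mem_iota add0n hf // -ltnS.
have := uniq_leq_size u sub; by rewrite size_map !size_iota ltnn.
Qed.

Section Prod.
Variables (n : nat) (A : 'I_n -> AGroup) (H K : prodGroup A -> Prop).
Hypothesis idp : internal_direct_product H K.
Hypothesis fiHK : finite_index (prod_set H K) (whole (G := prodGroup A)).

Local Notation P := (prodGroup A).

Lemma ppow (x : P) k j : (gpow x k) j = gpow (x j) k.
Proof. elim: k => //= k IH. by rewrite -IH. Qed.

Lemma pmulE (x y : P) j : (gmul x y) j = gmul (x j) (y j).
Proof. by []. Qed.

Definition restr (p : 'I_n -> bool) (u : P) : P := fun j => if p j then u j else gone.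

Lemma restr_pow p u k : gpow (restr p u) k = restr p (gpow u k).
Proof.
apply: functional_extensionality_dep => j; rewrite ppow /restr.
case: (p j); by rewrite ?ppow ?gpow1g.
Qed.

Lemma HKdiv x y : prod_set H K x -> prod_set H K y -> prod_set H K (gmul (ginv x) y).
Proof.
case: idp => [[H1 [HM HV]] [[K1 [KM KV]] [HKc HK1]]].
move=> [h1 [c1 [Hh1 [Kc1 ->]]]] [h2 [c2 [Hh2 [Kc2 ->]]]].
exists (gmul (ginv h1) h2), (gmul (ginv c1) c2); split; first by apply: HM => //; exact: HV.
split; first by apply: KM => //; exact: KV.
have c : gcommute (gmul (ginv h1) h2) (ginv c1).
  apply: comm_inv; apply: HKc => //; apply: HM => //; exact: HV.
by rewrite invMg -gmulA (gmulA (ginv h1)) gmulA -c -gmulA.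
Qed.

Lemma pow_HK (a : P) : exists k, 1 <= k /\ prod_set H K (gpow a k).
Proof.
case: fiHK => [_ [l [_ hl]]].
have ex : forall p, exists i, i < size l /\ prod_set H K (gmul (ginv (List.nth i l gone)) (gpow a p)).
  move=> p; have [y [yl hy]] := hl (gpow a p) I.
  have [i [hi e]] := In_nth l y gone yl.
  exists i; split; first by apply/ltP.
  by rewrite e.
pose f p := proj1_sig (constructive_indefinite_description _ (ex p)).
have fP p : f p < size l /\ prod_set H K (gmul (ginv (List.nth (f p) l gone)) (gpow a p)).
  exact: (proj2_sig (constructive_indefinite_description _ (ex p))).
have [p [q [hpq e]]] := pigeon (fun p _ => proj1 (fP p)).
case/andP: hpq => hpq _.
exists (q - p); split; first by rewrite subn_gt0.
have := HKdiv (proj2 (fP p)) (proj2 (fP q)).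
rewrite e invMg invgK -gmulA mulVKg.
by rewrite -{1}(subnKC (ltnW hpq)) gpowD mulKg.
Qed.

Lemma dp_uniq h1 c1 h2 c2 : H h1 -> K c1 -> H h2 -> K c2 ->
  gmul h1 c1 = gmul h2 c2 -> h1 = h2 /\ c1 = c2.
Proof.
case: idp => [[H1 [HM HV]] [[K1 [KM KV]] [HKc HK1]]] Hh1 Kc1 Hh2 Kc2 e.
have e2 : gmul c2 (ginv c1) = gmul (ginv h2) h1.
  by rewrite -(mulKg h2 c2) -e gmulA mulgK.
have e1 : gmul (ginv h2) h1 = gone.
  apply: HK1; first by apply: HM => //; exact: HV.
  rewrite -e2; apply: KM => //; exact: KV.
have eh : h1 = h2 by rewrite -(mulVKg h2 h1) e1 mulg1.
split=> //; subst h2; exact: mulgI e.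
Qed.

End Prod.

Section Cyc.
Variable G : AGroup.
Definition Pw (s : G) (x : G) := exists k, x = gpow s k \/ x = ginv (gpow s k).

Lemma pw_sub (s : G) : is_subgroup (Pw s).
Proof.
split; first by exists 0; left.
split.
- move=> x y [a [->|->]] [b [->|->]].
  + by exists (a + b); left; rewrite gpowD.
  + case: (leqP b a) => hab.
      exists (a - b); left; by rewrite -{1}(subnK hab) gpowD mulgK.
    exists (b - a); right; by rewrite -{1}(subnK (ltnW hab)) gpowD invMg mulVKg.
  + case: (leqP a b) => hab.
      exists (b - a); left; by rewrite -{1}(subnKC hab) gpowD mulKg.
    exists (a - b); right; by rewrite -{1}(subnKC (ltnW hab)) gpowD invMg mulgVK.
  + by exists (b + a); right; rewrite gpowD invMg.
- move=> x [a [->|->]]; exists a; [right | left] => //; by rewrite invgK.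
Qed.

Lemma cyc (S X : G -> Prop) s : is_subgroup S -> S s ->
  (forall x, S x -> generated X x) -> (forall x, X x -> x = s) -> cyclic_subgroup S.
Proof.
move=> _ Ss gen Xs; exists s; split=> // x Sx.
apply: (gen x Sx _ (pw_sub s)) => y /Xs ->; exists 1; left; by rewrite gpow1.
Qed.
End Cyc.

Section Main.
Variables (n : nat) (A : 'I_n -> AGroup) (H K : prodGroup A -> Prop).
Hypothesis idp : internal_direct_product H K.
Hypothesis fiHK : finite_index (prod_set H K) (whole (G := prodGroup A)).
Hypothesis asc : forall i, almost_stable_centralisers (A i).
Local Notation P := (prodGroup A).

Definition Good (u : P) j := exists k, 1 <= k /\ K (gpow (restr (fun l => l == j) u) k).

Lemma comm_restr p (x u : P) : gcommute x u -> gcommute x (restr p u).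
Proof.
rewrite /gcommute => e; apply: functional_extensionality_dep => j; rewrite !pmulE /restr.
case: (p j); [exact: (congr1 (fun f : P => f j) e) | by rewrite mulg1 gmul1].
Qed.

Definition emb j (a : A j) : P := fun l =>
  match j =P l with ReflectT e => eq_rect j A a l e | ReflectF _ => gone end.

Lemma emb_j j (a : A j) : emb a j = a.
Proof. rewrite /emb; case: (j =P j) => [e|] //; by rewrite (eq_irrelevance e erefl). Qed.

Lemma good_vz (u : P) j : H u -> Good u j -> virtual_centre (u j).
Proof.
case: idp => [[H1 [HM HV]] [[K1 [KM KV]] [HKc HK1]]] Hu [k [k1 Kk]].
have gk : (gpow (restr (fun l => l == j) u) k) j = gpow (u j) k by rewrite ppow /restr eqxx.
have fi : finite_index (centraliser (gpow (u j) k)) (@whole (A j)).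
  split=> //; case: fiHK => _ [l [_ hl]].
  exists (List.map (fun y : P => y j) l); split=> // a _.
  have [y [yl [h [c [Hh [Kc e]]]]]] := hl (emb a) I.
  exists (y j); split; first by apply: (in_map (fun y : P => y j)).
  split=> //.
  have : (gmul (ginv y) (emb a)) j = gmul (h j) (c j) by rewrite e.
  rewrite pmulE emb_j => ->.
  apply: comm_sym; apply: comm_mul.
  - rewrite -gk; apply: comm_sym; exact: (congr1 (fun f : P => f j) (HKc _ _ Hh Kk)).
  - apply: comm_sym; apply: comm_pow; apply: comm_sym; exact: (congr1 (fun f : P => f j) (HKc _ _ Hu Kc)).
apply: vz_centr; exact: fi_trans (asc (u j) k1) fi.
Qed.

Lemma allgood (u : P) : (forall j, Good u j) -> exists k, 1 <= k /\ K (gpow u k).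
Proof.
case: idp => [[H1 [HM HV]] [[K1 [KM KV]] [HKc HK1]]] Hg.
have gen : forall L : seq 'I_n, exists k, 1 <= k /\ K (gpow (restr (fun l => l \in L) u) k).
  elim=> [|i L [b [b1 Kb]]].
    exists 1; split=> //.
    have -> : restr (fun l => l \in [::]) u = gone.
      by apply: functional_extensionality_dep => l; rewrite /restr in_nil.
    by rewrite gpow1g.
  have [a [a1 Ka]] := Hg i.
  exists (a * b); split; first by rewrite muln_gt0 a1.
  case iL: (i \in L).
    have -> : restr (fun l => l \in i :: L) u = restr (fun l => l \in L) u.
      apply: functional_extensionality_dep => l; rewrite /restr in_cons.
      by case: eqP => // ->; rewrite iL.
    have sK : is_subgroup K by case: idp => _ [].
    by rewrite mulnC gpowM; apply: sub_pow.
  have -> : gpow (restr (fun l => l \in i :: L) u) (a * b) =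
     gmul (gpow (gpow (restr (fun l => l == i) u) a) b) (gpow (gpow (restr (fun l => l \in L) u) b) a).
    rewrite -!gpowM !restr_pow (mulnC b a).
    apply: functional_extensionality_dep => l; rewrite pmulE /restr in_cons.
    case: eqP => [->|_] /=; [by rewrite iL mulg1 | by rewrite gmul1].
  have sK : is_subgroup K by case: idp => _ [].
  by apply: KM; apply: sub_pow.
have [k [k1 Kk]] := gen (enum 'I_n); exists k; split=> //.
have <- : restr (fun l => l \in enum 'I_n) u = u.
  by apply: functional_extensionality_dep => l; rewrite /restr mem_enum.
done.
Qed.

End Main.

Section L.
Variables (n : nat) (A : 'I_n -> AGroup) (H K : prodGroup A -> Prop).
Hypothesis idp : internal_direct_product H K.
Hypothesis fiHK : finite_index (prod_set H K) (whole (G := prodGroup A)).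
Local Notation P := (prodGroup A).
Variable X : P -> Prop.
Hypothesis XH : forall x, X x -> H x.
Hypothesis indep : forall s1 s2, X s1 -> X s2 -> s1 <> s2 ->
     forall p q : nat, 1 <= p -> 1 <= q -> ~ gcommute (gpow s1 p) (gpow s2 q).
Hypothesis maxc : forall s g, X s -> H g ->
     strict_subset (centraliser_in H s) (centraliser_in H g) -> g = gone.

Lemma cent_eq u i a h c : X u -> H h -> K c ->
  gpow (restr (fun l => l == i) u) a = gmul h c -> h <> gone ->
  forall x, H x -> (gcommute x u <-> gcommute x h).
Proof.
case: idp => [[H1 [HM HV]] [[K1 [KM KV]] [HKc HK1]]] Xu Hh Kc E hne.
have dir1 : forall x, H x -> gcommute x u -> gcommute x h.
  move=> x Hx xu.
  have e := comm_pow a (comm_restr (fun l => l == i) xu).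
  rewrite E in e. have xc := HKc x c Hx Kc.
  rewrite /gcommute in e xc *. apply: (@mulIg _ c).
  by rewrite -gmulA e -gmulA -xc gmulA.
move=> x Hx; split; first exact: dir1.
move=> xh; apply: NNPP => nxu; apply: hne; apply: (maxc Xu Hh).
split; first by move=> y [Hy yu]; split=> //; exact: dir1.
by exists x; split=> // [[_ ?]].
Qed.

Lemma Lmain u v i j : X u -> X v -> u <> v -> i <> j ->
  ~ Good K u i -> ~ Good K v j -> False.
Proof.
move=> Xu Xv uv ij nGu nGv.
have [[H1 [HM HV]] [[K1 [KM KV]] [HKc HK1]]] := idp.
have [a [a1 [h [c [Hh [Kc E]]]]]] := pow_HK idp fiHK (restr (fun l => l == i) u).
have [b [b1 [h' [c' [Hh' [Kc' E']]]]]] := pow_HK idp fiHK (restr (fun l => l == j) v).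
have hne : h <> gone.
  by move=> h1; apply: nGu; exists a; split=> //; rewrite E h1 gmul1.
have hne' : h' <> gone.
  by move=> h1; apply: nGv; exists b; split=> //; rewrite E' h1 gmul1.
have ce := cent_eq Xu Hh Kc E hne.
have ce' := cent_eq Xv Hh' Kc' E' hne'.
have rc : gcommute (restr (fun l => l == i) u) (restr (fun l => l == j) v).
  rewrite /gcommute; apply: functional_extensionality_dep => l; rewrite !pmulE /restr.
  case ei: (l == i); case ej: (l == j); rewrite ?mulg1 ?gmul1 //.
  by move/eqP: ei => ei; move/eqP: ej => ej; case: ij; rewrite -ei -ej.
have pc := comm_pow2 a b rc; rewrite E E' /gcommute in pc.
have hc' : gmul h' c = gmul c h' := HKc _ _ Hh' Kc.
have h'c : gmul h c' = gmul c' h := HKc _ _ Hh Kc'.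
have hh' : gcommute h h'.
  have e1 : gmul (gmul h c) (gmul h' c') = gmul (gmul h h') (gmul c c').
    by rewrite -!gmulA (gmulA c) -hc' -gmulA.
  have e2 : gmul (gmul h' c') (gmul h c) = gmul (gmul h' h) (gmul c' c).
    by rewrite -!gmulA (gmulA c') -h'c -gmulA.
  rewrite e1 e2 in pc.
  exact: (proj1 (dp_uniq idp (HM _ _ Hh Hh') (KM _ _ Kc Kc') (HM _ _ Hh' Hh) (KM _ _ Kc' Kc) pc)).
have h'u : gcommute h' u := proj2 (ce h' Hh') (comm_sym hh').
have uv' : gcommute u v := proj2 (ce' u (XH Xu)) (comm_sym h'u).
by apply: (indep Xu Xv uv (p:=1) (q:=1)) => //; rewrite !gpow1.
Qed.

End L.


Theorem lemma3p5 (n : nat) (A : 'I_n -> AGroup)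
  (H K : prodGroup A -> Prop) :
  internal_direct_product H K ->
  finite_index (prod_set H K) (whole (G := prodGroup A)) ->
  (forall i, almost_stable_centralisers (A i)) ->
  ~ cyclic_subgroup H ->
  (exists X, IMC_generating_set H X) ->
  exists i : 'I_n, forall h : prodGroup A, H h ->
    forall j : 'I_n, j <> i -> virtual_centre (h j).
Proof.
move=> idp fiHK asc ncyc [X [XH [gen [indep maxc]]]].
have [[H1 [HM HV]] [[K1 [KM KV]] [HKc HK1]]] := idp.
have sH : is_subgroup H by case: idp.
have two : exists s t, X s /\ X t /\ s <> t.
  apply: NNPP => nt; apply: ncyc.
  case: (classic (exists s, X s)) => [[s Xs]|nX].
  - apply: (cyc (s:=s) sH (XH _ Xs) gen) => x Xx.
    by apply: NNPP => ne; apply: nt; exists x, s.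
  - apply: (cyc (s:=gone) sH H1 gen) => x Xx. by case: nX; exists x.
have [s0 [t0 [Xs0 [Xt0 st]]]] := two.
have nag : forall w u, X w -> X u -> w <> u -> exists j, ~ Good K w j.
  move=> w u Xw Xu wu; apply: NNPP => nj.
  have [k [k1 Kk]] := allgood idp (u:=w) (fun j => NNPP _ (fun ng => nj (ex_intro (fun j => ~ Good K w j) j ng))).
  have w1 : gpow w k = gone := HK1 _ (sub_pow k sH (XH _ Xw)) Kk.
  apply: (indep _ _ Xw Xu wu k 1) => //; rewrite w1; exact: comm_sym (comm1 _).
have fin : forall j, (forall v, X v -> Good K v j) -> forall h, H h -> virtual_centre (h j).
  move=> j Gj h Hh; apply: (gen h Hh (fun x : prodGroup A => virtual_centre (x j))).
  - split; first exact: vz1. split => x y; [exact: vzM | exact: vzV].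
  - move=> v Xv; exact: (good_vz idp fiHK asc (XH _ Xv) (Gj v Xv)).
have LM := Lmain idp fiHK XH indep.
case: (classic (exists u i, X u /\ ~ Good K u i)) => [[u [i [Xu nGu]]]|ng].
- exists i => h Hh j ji; apply: fin h Hh => v Xv; apply: NNPP => nGv.
  case: (classic (v = u)) => [vu|vu]; last exact: (LM maxc _ _ _ _ Xu Xv (nesym vu) (nesym ji) nGu nGv).
  subst v.
  have [w [Xw wu]] : exists w, X w /\ w <> u.
    case: (classic (s0 = u)) => [e|e]; last by exists s0.
    by exists t0; split=> //; rewrite -e; apply: nesym.
  have [l nGw] := nag w u Xw Xu wu.
  have il : i = l by apply: NNPP => il; exact: (LM maxc _ _ _ _ Xu Xw (nesym wu) il nGu nGw).
  subst l; exact: (LM maxc _ _ _ _ Xw Xu wu (nesym ji) nGw nGv).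
- case: (classic (exists i : 'I_n, True)) => [[i _]|nI].
  + exists i => h Hh j _; apply: fin h Hh => v Xv; apply: NNPP => nG; apply: ng; by exists v, j.
  + case: st; apply: functional_extensionality_dep => i; case: nI; by exists i.
Qed.
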